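(* Let $X$ be a finite set and let $c$ be a choice correspondence on $X$ that admits a minimal compromise representation. Then $c$ satisfies axiom $\gamma$: for all menus $A,B$, if $x\in c(A)\cap c(B)$ then $x\in c(A\cup B)$; and $c$ satisfies No Binary Cycles: for all $x,y,z\in X$, if $x\in c(\{x,y\})$ and $y\in c(\{y,z\})$, then $x\in c(\{x,z\})$.
   Context: A menu is a nonempty subset of $X$. A choice correspondence is a map $c$ assigning to each menu $A$ a nonempty subset $c(A)\subseteq A$. A weak order is a complete and transitive binary relation on $X$; a linear order is an antisymmetric weak order. For a weak order $R$ and menu $A$, $\max(A,R)=\{x\in A: xRy \text{ for all } y\in A\}$. For a linear order $L$, $\min(A,L)$ denotes the unique $x\in A$ with $yLx$ for all $y\in A$. A choice correspondence $c$ admits a minimal compromise representation if there exist a weak order $R$ and a linear order $L$ on $X$ such that for every menu $A$: $c(A)=\max(A,R)$ if $\max(A,R)$ is a singleton, and $c(A)=\max(A,R)\setminus\{\min(\max(A,R),L)\}$ otherwise. *)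

(* Defs.v *)
From mathcomp Require Import all_boot.
Set Implicit Arguments. Unset Strict Implicit. Unset Printing Implicit Defensive.

Section Choice.
Variable X : finType.

Definition menu (A : {set X}) : Prop := A != set0.

Definition choice_corr (c : {set X} -> {set X}) : Prop :=
  forall A, menu A -> c A \subset A /\ c A != set0.

Definition complete (R : rel X) : Prop := forall x y, R x y || R y x.
Definition weak_order (R : rel X) : Prop := complete R /\ transitive R.
Definition linear_order (L : rel X) : Prop :=
  weak_order L /\ antisymmetric L.

Definition maxR (R : rel X) (A : {set X}) : {set X} :=
  [set x in A | [forall y in A, R x y]].

Definition is_minL (L : rel X) (M : {set X}) (z : X) : Prop :=
  z \in M /\ forall y, y \in M -> L y z.

Definition minimal_compromise (c : {set X} -> {set X}) : Prop :=
  exists (R L : rel X), weak_order R /\ linear_order L /\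
    forall A, menu A ->
      (#|maxR R A| = 1 -> c A = maxR R A) /\
      (#|maxR R A| <> 1 ->
         forall z, is_minL L (maxR R A) z -> c A = maxR R A :\ z).

Definition axiom_gamma (c : {set X} -> {set X}) : Prop :=
  forall A B x, menu A -> menu B ->
    x \in c A -> x \in c B -> x \in c (A :|: B).

Definition no_binary_cycles (c : {set X} -> {set X}) : Prop :=
  forall x y z : X, x \in c [set x; y] -> y \in c [set y; z] ->
    x \in c [set x; z].
End Choice.

(* Main.v *)
Require Import Defs.
From mathcomp Require Import all_boot.

Section Aux.
Variable X : finType.

Lemma ex_min_seq (L : rel X) : complete L -> transitive L ->
  forall s : seq X, s != [::] -> exists2 z, z \in s & forall y, y \in s -> L y z.
Proof.
move=> cL tL; elim=> [//|a t IH] _.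
have Laa : L a a by have := cL a a; rewrite orbb.
case: t IH => [|b t] IH.
  exists a; first by rewrite mem_seq1.
  by move=> y; rewrite mem_seq1 => /eqP->.
have [z zt hz] := IH isT.
case/orP: (cL a z) => haz.
  exists z; first by rewrite in_cons zt orbT.
  by move=> y; rewrite in_cons => /orP[/eqP->//|]; exact: hz.
exists a; first exact: mem_head.
move=> y; rewrite in_cons => /orP[/eqP->//|yt].
exact: (tL _ _ _ (hz _ yt) haz).
Qed.

Lemma ex_minL (L : rel X) : complete L -> transitive L ->
  forall M : {set X}, M != set0 -> exists z, is_minL L M z.
Proof.
move=> cL tL M hM.
have [x xM] := set0Pn _ hM.
have ne : enum M != [::].
  by apply/eqP => e; move: (mem_enum M x); rewrite e xM.
have [z zs hz] := @ex_min_seq L cL tL _ ne.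
exists z; split; first by rewrite -mem_enum.
by move=> y yM; apply: hz; rewrite mem_enum.
Qed.

Lemma maxR_ne (R : rel X) : complete R -> transitive R ->
  forall A : {set X}, A != set0 -> maxR R A != set0.
Proof.
move=> cR tR A hA.
have cR' : complete (fun a b => R b a) by move=> a b; rewrite orbC; exact: cR.
have tR' : transitive (fun a b => R b a).
  by move=> y x z h1 h2; exact: (tR _ _ _ h2 h1).
have [z [zA hz]] := @ex_minL _ cR' tR' _ hA.
apply/set0Pn; exists z; rewrite inE zA /=; apply/forall_inP => y yA; exact: hz.
Qed.

Variables (c : {set X} -> {set X}) (R L : rel X).
Hypotheses (cR : complete R) (tR : transitive R) (cL : complete L)
  (tL : transitive L) (aL : antisymmetric L).
Hypothesis H : forall A, menu A ->
      (#|maxR R A| = 1 -> c A = maxR R A) /\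
      (#|maxR R A| <> 1 ->
         forall z, is_minL L (maxR R A) z -> c A = maxR R A :\ z).

Lemma c_fwd A x : menu A -> x \in c A ->
  x \in maxR R A /\ (maxR R A = [set x] \/
     exists w, [/\ w \in maxR R A, w != x & L x w]).
Proof.
move=> mA xc.
have [H1 H2] := H _ mA.
case: (boolP (#|maxR R A| == 1)) => /eqP hc.
  rewrite (H1 hc) in xc; split => //; left.
  have [a ea] : exists a, maxR R A = [set a] by apply/cards1P; apply/eqP.
  move: xc; rewrite ea inE => /eqP->; done.
have [z hz] := @ex_minL L cL tL _ (@maxR_ne R cR tR A mA).
rewrite (H2 hc z hz) in xc.
move: xc; rewrite in_setD1 => /andP[xz xm]; split => //; right.
case: hz => zm h; exists z; split => //; last exact: h.
by rewrite eq_sym.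
Qed.

Lemma c_bwd A x : menu A -> x \in maxR R A ->
  (maxR R A = [set x] \/ exists w, [/\ w \in maxR R A, w != x & L x w]) ->
  x \in c A.
Proof.
move=> mA xm hx.
have [H1 H2] := H _ mA.
case: (boolP (#|maxR R A| == 1)) => /eqP hc.
  by rewrite (H1 hc).
have [z hz] := @ex_minL L cL tL _ (@maxR_ne R cR tR A mA).
rewrite (H2 hc z hz) in_setD1 xm andbT.
apply/eqP => exz; subst z.
case: hx => [e|[w [wm wx Lxw]]].
  by apply: hc; rewrite e cards1.
case: hz => _ h.
have := @aL x w (introT andP (conj Lxw (h _ wm))).
move=> e; rewrite e eqxx in wx; done.
Qed.

End Aux.

Theorem lemma2 (X : finType) (c : {set X} -> {set X}) :
  choice_corr c -> minimal_compromise c ->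
  axiom_gamma c /\ no_binary_cycles c.
Proof.
move=> cc [R [L [[cR tR] [[[cL tL] aL] H]]]].
have fwd := @c_fwd X c R L cR tR cL tL H.
have bwd := @c_bwd X c R L cR tR cL tL aL H.
have Rrefl : forall a, R a a by move=> a; have := cR a a; rewrite orbb.
have menu2 : forall a b : X, menu [set a; b].
  by move=> a b; apply/set0Pn; exists a; rewrite !inE eqxx.
split.
- move=> A B x mA mB xA xB.
  have mAB : menu (A :|: B).
    by apply/set0Pn; have [a aA] := set0Pn _ mA; exists a; rewrite inE aA.
  have [xmA hA] := fwd _ _ mA xA.
  have [xmB hB] := fwd _ _ mB xB.
  move: (xmA) (xmB); rewrite !inE => /andP[xAA /forall_inP fA] /andP[xBB /forall_inP fB].
  have xM : x \in maxR R (A :|: B).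
    rewrite inE inE xAA /=; apply/forall_inP => w; rewrite inE => /orP[]; auto.
  have subA : forall y, y \in maxR R A -> y \in maxR R (A :|: B).
    move=> y; rewrite !inE => /andP[yA /forall_inP fy].
    rewrite yA /=; apply/forall_inP => w; rewrite inE => /orP[wA|wB]; first exact: fy.
    exact: (tR _ _ _ (fy _ xAA) (fB _ wB)).
  have subB : forall y, y \in maxR R B -> y \in maxR R (A :|: B).
    move=> y; rewrite !inE => /andP[yB /forall_inP fy].
    rewrite yB orbT /=; apply/forall_inP => w; rewrite inE => /orP[wA|wB]; last exact: fy.
    exact: (tR _ _ _ (fy _ xBB) (fA _ wA)).
  apply: bwd => //.
  case: hA => [eA|[w [wm wx Lxw]]]; last by right; exists w; split => //; apply: subA.
  case: hB => [eB|[w [wm wx Lxw]]]; last by right; exists w; split => //; apply: subB.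
  left; apply/setP => y; rewrite inE; apply/idP/idP; last by move/eqP->.
  rewrite inE inE => /andP[/orP[yA|yB] /forall_inP fy].
    have : y \in maxR R A.
      rewrite inE yA /=; apply/forall_inP => w wA; apply: fy; by rewrite inE wA.
    by rewrite eA inE.
  have : y \in maxR R B.
    rewrite inE yB /=; apply/forall_inP => w wB; apply: fy; by rewrite inE wB orbT.
  by rewrite eB inE.
- move=> x y z hx hy.
  have [xm hx'] := fwd _ _ (menu2 x y) hx.
  have [ym hy'] := fwd _ _ (menu2 y z) hy.
  have Rxy : R x y by move: xm; rewrite inE => /andP[_ /forall_inP]; apply; rewrite !inE eqxx orbT.
  have Ryz : R y z by move: ym; rewrite inE => /andP[_ /forall_inP]; apply; rewrite !inE eqxx orbT.
  have Rxz := tR _ _ _ Rxy Ryz.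
  case: (eqVneq x y) => [exy|nxy]; first by subst y.
  case: (eqVneq y z) => [eyz|nyz]; first by subst z.
  have xm2 : x \in maxR R [set x; z].
    rewrite inE !inE eqxx /=; apply/forall_inP => w; rewrite !inE => /orP[]/eqP->//.
  apply: bwd => //.
  case: (eqVneq z x) => [ezx|nzx].
    left; apply/setP => w; rewrite inE; apply/idP/idP; last by move/eqP->.
    by rewrite !inE ezx orbb => /andP[].
  case: (boolP (z \in maxR R [set x; z])) => zm; last first.
    left; apply/setP => w; rewrite inE; apply/idP/idP; last by move/eqP->.
    rewrite inE !inE => /andP[/orP[//|/eqP ewz] hw].
    by move: zm; rewrite ewz in hw *; rewrite inE !inE eqxx orbT hw.
  right; exists z; split => //.
  have Rzx : R z x by move: zm; rewrite inE => /andP[_ /forall_inP]; apply; rewrite !inE eqxx.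
  have Rzy := tR _ _ _ Rzx Rxy.
  have Ryx := tR _ _ _ Ryz Rzx.
  have ym2 : y \in maxR R [set x; y].
    rewrite inE !inE eqxx orbT /=; apply/forall_inP => w; rewrite !inE => /orP[]/eqP->//.
  have zm2 : z \in maxR R [set y; z].
    rewrite inE !inE eqxx orbT /=; apply/forall_inP => w; rewrite !inE => /orP[]/eqP->//.
  have Lxy : L x y.
    case: hx' => [e|[w [wm wx Lxw]]].
      by move: ym2; rewrite e inE eq_sym (negbTE nxy).
    rewrite !inE in wm; case/andP: wm => /orP[/eqP ewx|/eqP ewy] _.
      by rewrite ewx eqxx in wx.
    by rewrite -ewy.
  have Lyz : L y z.
    case: hy' => [e|[w [wm wx Lxw]]].
      by move: zm2; rewrite e inE eq_sym (negbTE nyz).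
    rewrite !inE in wm; case/andP: wm => /orP[/eqP ewx|/eqP ewy] _.
      by rewrite ewx eqxx in wx.
    by rewrite -ewy.
  exact: (tL _ _ _ Lxy Lyz).
Qed.
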